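(* Every linear BCK-algebra $\mathcal A$ of order $n$ satisfies $\operatorname{id}(\mathcal A)\ge\frac{n^2+3n-2}{2n^2}$, and for every $n\ge3$ equality holds for $\mathcal C_n$: $\operatorname{id}(\mathcal C_n)=\frac{n^2+3n-2}{2n^2}$. In particular every finite linear BCK-algebra $\mathcal A$ satisfies $\frac12<\operatorname{id}(\mathcal A)\le1$.
   Context: A BCK-algebra is a set $A$ with a binary operation $\cdot$ and a constant $0$ such that for all $x,y,z\in A$: (BCK1) $((x\cdot y)\cdot(x\cdot z))\cdot(z\cdot y)=0$; (BCK2) $(x\cdot(x\cdot y))\cdot y=0$; (BCK3) $x\cdot x=0$; (BCK4) $0\cdot x=0$; (BCK5) $x\cdot y=0$ and $y\cdot x=0$ imply $x=y$. The order $x\le y$ iff $x\cdot y=0$; the algebra is linear if this order is a chain. For finite $\mathcal A$, $\operatorname{id}(\mathcal A)=|\{(x,y)\in A^2:x\cdot(y\cdot x)=x\}|/|A|^2$. For $n\ge2$, $\mathcal C_n$ is the BCK-algebra with carrier $\{0,1,\dots,n-1\}$ and $x\cdot y=\max\{x-y,0\}$. *)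

(* Defs.v *)
From mathcomp Require Import all_boot all_order all_algebra.
Set Implicit Arguments. Unset Strict Implicit. Unset Printing Implicit Defensive.
Import GRing.Theory Num.Theory.

Definition is_BCK (T : eqType) (op : T -> T -> T) (z : T) : Prop :=
  [/\ (forall x y w, op (op (op x y) (op x w)) (op w y) = z),
      (forall x y, op (op x (op x y)) y = z),
      (forall x, op x x = z),
      (forall x, op z x = z)
    & (forall x y, op x y = z -> op y x = z -> x = y)].

(* linear: the order x <= y iff x*y = 0 is a chain *)
Definition BCK_linear (T : eqType) (op : T -> T -> T) (z : T) : Prop :=
  forall x y, op x y = z \/ op y x = z.

Definition id_deg (T : finType) (op : T -> T -> T) : rat :=
  (#|[set p : T * T | op p.1 (op p.2 p.1) == p.1]|%:R / (#|T| ^ 2)%:R)%R.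

(* C_n : carrier {0,...,n-1}, x*y = max(x-y,0) (truncated nat subtraction) *)
Definition Cop (n : nat) (x y : 'I_n) : 'I_n :=
  Ordinal (leq_ltn_trans (leq_subr y x) (ltn_ord x)).

(* Main.v *)
Require Import Defs.
From mathcomp Require Import all_boot all_order all_algebra.
From mathcomp Require Import zify.
From mathcomp Require Import ring lra.


Section Gen.
Variables (T : finType) (op : T -> T -> T) (z : T).
Hypotheses (HB : is_BCK op z) (HL : BCK_linear op z).

Lemma opx0 x : op x z = x.
Proof.
case: HB => H1 H2 H3 H4 H5.
apply: (H5).
  by have := H2 x x; rewrite H3.
by apply: (H5); [exact: H2 | exact: H4].
Qed.

Definition SS := [set p : T * T | op p.1 (op p.2 p.1) == p.1].
Definition AA := [set p : T * T | op p.2 p.1 == z].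
Definition BB := [set p : T * T | (p.1 == z) && (p.2 != z)].

Lemma cardAA : 2 * #|AA| = #|T| ^ 2 + #|T|.
Proof.
case: HB => H1 H2 H3 H4 H5.
set A2 := [set p : T * T | op p.1 p.2 == z].
have eA : #|A2| = #|AA|.
  have -> : A2 = (fun p : T * T => (p.2, p.1)) @^-1: AA.
    by apply/setP => -[x y]; rewrite !inE.
  by apply: card_preimset => -[a b] [c d] /= [-> ->].
have hU : AA :|: A2 = setT.
  apply/setP => -[x y]; rewrite !inE /=.
  by case: (HL x y) => ->; rewrite eqxx ?orbT.
have hI : AA :&: A2 = [set (x, x) | x in T].
  apply/setP => -[x y]; rewrite !inE /=.
  apply/andP/imsetP.
    by case=> /eqP a /eqP b; exists x => //; rewrite (H5 _ _ b a).
  by case=> w _ [-> ->]; rewrite H3 eqxx.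
have := cardsUI AA A2; rewrite hU hI cardsT card_prod card_imset; last by move=> a b [].
by rewrite eA -mulnn mul2n -addnn => h; symmetry; exact: h.
Qed.


Lemma cardBB : #|BB| = #|T|.-1.
Proof.
have -> : BB = [set (z, y) | y in [set~ z]].
  apply/setP => -[x y]; rewrite !inE /=; apply/andP/imsetP.
    by case=> /eqP -> h; exists y; rewrite // !inE.
  by case=> w; rewrite !inE => h [-> ->]; rewrite eqxx.
by rewrite card_imset ?cardsC1 // => a b [].
Qed.

Lemma disjAB : AA :&: BB = set0.
Proof.
apply/setP => -[x y]; rewrite !inE /=.
case: (x =P z) => [->|]; last by rewrite andbF.
by rewrite opx0 /= andbN.
Qed.

Lemma subABS : AA :|: BB \subset SS.
Proof.
case: HB => H1 H2 H3 H4 H5.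
apply/subsetP => -[x y]; rewrite !inE /= => /orP [h|/andP [h _]].
  by rewrite (eqP h) opx0.
by rewrite (eqP h) H4.
Qed.

Lemma cardAB : 2 * #|AA :|: BB| = #|T| ^ 2 + 3 * #|T| - 2.
Proof.
have := cardsUI AA BB; rewrite disjAB cards0 addn0 => ->.
have := cardAA; rewrite cardBB.
have : 0 < #|T| by apply/card_gt0P; exists z.
lia.
Qed.

Lemma boundS : #|T| ^ 2 + 3 * #|T| - 2 <= 2 * #|SS|.
Proof. by rewrite -cardAB leq_mul2l subset_leq_card ?subABS ?orbT. Qed.

Lemma exactS : (forall x y, op x (op y x) = x -> op y x = z \/ x = z) ->
  2 * #|SS| = #|T| ^ 2 + 3 * #|T| - 2.
Proof.
move=> H; rewrite -cardAB; suff -> : SS = AA :|: BB by [].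
apply/eqP; rewrite eqEsubset subABS andbT.
apply/subsetP => -[x y]; rewrite !inE /= => /eqP /H [->|->]; first by rewrite eqxx.
case: (y =P z) => [->|_]; last by rewrite eqxx orbT.
by case: HB => _ _ H3 _ _; rewrite H3 eqxx.
Qed.
End Gen.
Arguments boundS {T op z}.
Arguments exactS {T op z}.
Import GRing.Theory Num.Theory.
Local Open Scope ring_scope.

Lemma L1 (a b d : nat) : (0 < d)%N -> (a <= 2 * b)%N ->
  (a%:R / (2 * d)%N%:R : rat) <= b%:R / d%:R.
Proof.
move=> d0 h.
have dp : (0 : rat) < d%:R by rewrite ltr0n.
rewrite ler_pdivrMr ?ltr0n ?muln_gt0 // natrM.
have -> : (b%:R / d%:R * (2%:R * d%:R) : rat) = (2 * b)%N%:R.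
  by rewrite natrM; field; rewrite pnatr_eq0 -lt0n.
by rewrite ler_nat.
Qed.

Lemma L2 (a b d : nat) : (0 < d)%N -> (2 * b = a)%N ->
  (b%:R / d%:R : rat) = a%:R / (2 * d)%N%:R.
Proof.
move=> d0 <-.
have dp : (0 : rat) < d%:R by rewrite ltr0n.
by rewrite !natrM; field; rewrite pnatr_eq0 -lt0n.
Qed.

Lemma L3 (a d : nat) : (0 < d)%N -> (d < a)%N ->
  (1 / 2 : rat) < a%:R / (2 * d)%N%:R.
Proof.
move=> d0 h.
have dp : (0 : rat) < d%:R by rewrite ltr0n.
have : (d%:R : rat) < a%:R by rewrite ltr_nat.
rewrite ltr_pdivlMr ?ltr0n ?muln_gt0 // natrM.
move=> h2; lra.
Qed.

Lemma L4 (s d : nat) : (0 < d)%N -> (s <= d)%N -> (s%:R / d%:R : rat) <= 1.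
Proof.
move=> d0 h; rewrite ler_pdivrMr ?ltr0n // mul1r ler_nat //.
Qed.

Lemma Cop_BCK m : is_BCK (@Cop m.+1) ord0.
Proof.
split.
- by move=> x y w; apply: val_inj => /=; lia.
- by move=> x y; apply: val_inj => /=; lia.
- by move=> x; apply: val_inj => /=; lia.
- by move=> x; apply: val_inj => /=; lia.
- move=> x y /(congr1 val) /= h1 /(congr1 val) /= h2; apply: val_inj => /=; lia.
Qed.

Lemma Cop_lin m : BCK_linear (@Cop m.+1) ord0.
Proof.
move=> x y; case: (leqP x y) => h; [left|right]; apply: val_inj => /=; lia.
Qed.

Lemma Cop_ex m (x y : 'I_m.+1) :
  Cop x (Cop y x) = x -> Cop y x = ord0 \/ x = ord0.
Proof.
move=> /(congr1 val) /= h.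
case: (leqP y x) => h2; [left|right]; apply: val_inj => /=; lia.
Qed.

Theorem mainTheorem19 :
  (forall (T : finType) (op : T -> T -> T) (z : T),
      is_BCK op z -> BCK_linear op z ->
      ((#|T| ^ 2 + 3 * #|T| - 2)%N%:R / (2 * #|T| ^ 2)%N%:R : rat) <= id_deg op)
  /\ (forall n : nat, (3 <= n)%N ->
      id_deg (@Cop n) = ((n ^ 2 + 3 * n - 2)%N%:R / (2 * n ^ 2)%N%:R : rat))
  /\ (forall (T : finType) (op : T -> T -> T) (z : T),
      is_BCK op z -> BCK_linear op z ->
      1 / 2 < id_deg op /\ id_deg op <= 1).
Proof.
have part1 : forall (T : finType) (op : T -> T -> T) (z : T),
      is_BCK op z -> BCK_linear op z ->
      ((#|T| ^ 2 + 3 * #|T| - 2)%N%:R / (2 * #|T| ^ 2)%N%:R : rat) <= id_deg op.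
  move=> T op z hB hL.
  have d0 : (0 < #|T|)%N by apply/card_gt0P; exists z.
  rewrite /id_deg -/(SS T op); apply: L1; first by rewrite expn_gt0 d0.
  exact: boundS hB hL.
split; first exact: part1.
split.
  case=> [//|m] _.
  have := exactS (Cop_BCK m) (Cop_lin m) (@Cop_ex m); rewrite card_ord => e.
  rewrite /id_deg -/(SS _ (@Cop m.+1)) card_ord; exact: L2 e.
move=> T op z hB hL.
have d0 : (0 < #|T|)%N by apply/card_gt0P; exists z.
split.
  apply: Order.POrderTheory.lt_le_trans (part1 T op z hB hL); apply: L3; first by rewrite expn_gt0 d0.
  lia.
rewrite /id_deg -/(SS T op); apply: L4; first by rewrite expn_gt0 d0.
apply: leq_trans (max_card _) _; rewrite card_prod; lia.
Qed.
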